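(* Let $m, n_0, n_1$ be positive integers and $n(\lambda) = n_0 + n_1\lambda$. Suppose $x(\lambda) = x_0 + x_1\lambda$, $y(\lambda) = y_0 + y_1\lambda$, $z(\lambda) = z_0 + z_1\lambda$ are polynomials of degree $1$ with positive rational coefficients satisfying $$\frac{m}{n(\lambda)} = \frac{1}{x(\lambda)} + \frac{1}{y(\lambda)} + \frac{1}{z(\lambda)}$$ identically. Then $$x_1 = \frac{x_0 n_1}{n_0},\qquad y_1 = \frac{y_0 n_1}{n_0},\qquad z_1 = \frac{z_0 n_1}{n_0}.$$
   Context: $\lambda$ is an indeterminate; the equation is an identity of rational functions in $\lambda$. *)

(* Defs.v *)
From mathcomp Require Import all_boot all_order all_algebra.
From mathcomp Require Export fraction.
Set Implicit Arguments. Unset Strict Implicit. Unset Printing Implicit Defensive.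
Import GRing.Theory FracField.
Local Open Scope ring_scope.

Notation ratfun := {fraction {poly rat}}.

Definition toRF (p : {poly rat}) : ratfun := @FracField.tofrac _ p.

Definition lin (a b : rat) : {poly rat} := a%:P + b *: 'X.

(* Main.v *)
Require Import Defs.
From mathcomp Require Import all_boot all_order all_algebra.
From mathcomp Require Import ring lra.
Import Order.TTheory GRing.Theory Num.Theory.
Local Open Scope ring_scope.

Lemma linE a b t : (lin a b).[t] = a + b * t.
Proof. by rewrite /lin hornerD hornerC hornerZ hornerX. Qed.

Lemma linM k a b : lin (k * a) (k * b) = k%:P * lin a b.
Proof. by rewrite /lin mulrDr -polyCM mul_polyC scalerA. Qed.

Lemma lin_nz a b : 0 < a -> lin a b != 0.
Proof.
move=> ha; apply/negP=> /eqP h.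
have := congr1 (fun p => p.[0]) h; rewrite /= linE horner0 mulr0 addr0.
by move=> e; rewrite e ltxx in ha.
Qed.

Lemma toRF_nz a b : 0 < a -> toRF (lin a b) != 0.
Proof. by move=> ha; rewrite /toRF tofrac_eq0 lin_nz. Qed.

Lemma fld (F : fieldType) (c n x y z : F) : n != 0 -> x != 0 -> y != 0 -> z != 0 ->
  c / n = x^-1 + y^-1 + z^-1 -> c * (x * y * z) = n * (y * z + x * z + x * y).
Proof.
move=> nn nx ny nz H.
transitivity ((c / n) * (n * x * y * z)); first by field.
by rewrite H; field; rewrite ?nn ?nx ?ny ?nz.
Qed.

Lemma poly_id (m : nat) (N X Y Z : {poly rat}) :
  N != 0 -> X != 0 -> Y != 0 -> Z != 0 ->
  (m%:R : ratfun) / toRF N = (toRF X)^-1 + (toRF Y)^-1 + (toRF Z)^-1 ->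
  m%:R * (X * Y * Z) = N * (Y * Z + X * Z + X * Y).
Proof.
move=> nN nX nY nZ H.
have nN' : toRF N != 0 by rewrite /toRF tofrac_eq0.
have nX' : toRF X != 0 by rewrite /toRF tofrac_eq0.
have nY' : toRF Y != 0 by rewrite /toRF tofrac_eq0.
have nZ' : toRF Z != 0 by rewrite /toRF tofrac_eq0.
have hM : forall p q, toRF (p * q) = toRF p * toRF q by move=> p q; exact: tofracM.
have hD : forall p q, toRF (p + q) = toRF p + toRF q by move=> p q; exact: tofracD.
have hn : toRF m%:R = m%:R by exact: rmorph_nat.
have E : toRF (m%:R * (X * Y * Z)) = toRF (N * (Y * Z + X * Z + X * Y)).
  rewrite !hM !hD !hM hn.
  exact: (@fld ratfun _ _ _ _ _ nN' nX' nY' nZ' H).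
by apply/eqP; rewrite -tofrac_eq; apply/eqP.
Qed.

Section Core.
Variables (n0 n1 : rat).
Hypotheses (hn0 : 0 < n0) (hn1 : 0 < n1).
Let s := - (n0 / n1).
Let N := lin n0 n1.
Let nz1 : n1 != 0. Proof. by rewrite gt_eqF. Qed.

Lemma Ns : N.[s] = 0.
Proof. rewrite /N linE /s; field; rewrite ?nz1 //. Qed.

Lemma prop a b : (lin a b).[s] = 0 -> lin a b = (b / n1)%:P * N.
Proof.
rewrite linE /s /N => h; rewrite -linM; congr lin.
  have -> : a = - (b * - (n0 / n1)) by apply/eqP; rewrite -subr_eq0 opprK h.
  by field; rewrite ?nz1 //.
by field; rewrite ?nz1 //.
Qed.

Lemma helperB (e f z0 z1 : rat) : 0 < f -> 0 < z0 ->
  e%:P * lin z0 z1 = f%:P * N -> (lin z0 z1).[s] = 0.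
Proof.
move=> hf hz h.
have h0 := congr1 (fun p => p.[0]) h; have hs := congr1 (fun p => p.[s]) h.
move: h0 hs; rewrite /= !hornerM !hornerC Ns mulr0 /N !linE !mulr0 !addr0 => h0 /eqP.
rewrite mulf_eq0 => /orP [/eqP e0|/eqP //].
by move: h0; rewrite e0 mul0r => h0; have := mulr_gt0 hf hn0; rewrite -h0 ltxx.
Qed.

Lemma helperA' {c d y0 y1 z0 z1 : rat} : 0 < d -> 0 < y0 -> 0 < z0 ->
  c%:P * lin y0 y1 * lin z0 z1 = d%:P * N * (lin y0 y1 + lin z0 z1) ->
  (lin y0 y1).[s] = 0 -> (lin z0 z1).[s] = 0.
Proof.
move=> hd hy hz h /prop hY.
have hy1 : 0 < y1 / n1.
  have := congr1 (fun p => p.[0]) hY; rewrite /= hornerM hornerC /N !linE !mulr0 !addr0.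
  move=> e; have : 0 < y1 / n1 * n0 by rewrite -e.
  by rewrite pmulr_lgt0.
set mu := y1 / n1 in hY hy1; clearbody mu.
rewrite hY in h.
apply: (@helperB (c * mu - d) (d * mu)); first by nra.
  done.
have nN : N != 0 by rewrite /N lin_nz.
apply: (mulfI nN).
rewrite polyCB !polyCM.
move: h; set Z := lin z0 z1 => h.
have : N * ((c * mu)%:P * Z) = N * (d%:P * mu%:P * N + d%:P * Z).
  rewrite polyCM.
  transitivity (c%:P * (mu%:P * N) * Z); first by ring.
  by rewrite h; ring.
move=> h2.
transitivity (N * ((c * mu)%:P * Z) - N * (d%:P * Z)); first by rewrite polyCM; ring.
by rewrite h2; ring.
Qed.

Lemma helperA (c d y0 y1 z0 z1 : rat) : 0 < d -> 0 < y0 -> 0 < z0 ->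
  c%:P * lin y0 y1 * lin z0 z1 = d%:P * N * (lin y0 y1 + lin z0 z1) ->
  (lin y0 y1).[s] = 0 /\ (lin z0 z1).[s] = 0.
Proof.
move=> hd hy hz h.
have h' : c%:P * lin z0 z1 * lin y0 y1 = d%:P * N * (lin z0 z1 + lin y0 y1).
  by rewrite addrC -h; ring.
have hs := congr1 (fun p => p.[s]) h.
move: hs; rewrite /= !hornerM !hornerC Ns mulr0 mul0r => /eqP.
rewrite !mulf_eq0 => /orP [/orP [/eqP c0|/eqP Ys]|/eqP Zs].
- have := congr1 (fun p => p.[0]) h.
  rewrite /= !hornerM (hornerD (lin y0 y1)) !hornerC /N !linE !mulr0 !addr0 c0 !mul0r => e.
  have : 0 < d * n0 * (y0 + z0) by apply: mulr_gt0; [apply: mulr_gt0|lra].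
  by rewrite -e ltxx.
- by split => //; exact: (helperA' hd hy hz h Ys).
- by split => //; exact: (helperA' hd hz hy h' Zs).
Qed.

Lemma core (c x0 x1 y0 y1 z0 z1 : rat) : 0 < x1 -> 0 < y0 -> 0 < z0 ->
  c%:P * (lin x0 x1 * lin y0 y1 * lin z0 z1) =
    N * (lin y0 y1 * lin z0 z1 + lin x0 x1 * lin z0 z1 + lin x0 x1 * lin y0 y1) ->
  (lin x0 x1).[s] = 0 ->
  [/\ (lin x0 x1).[s] = 0, (lin y0 y1).[s] = 0 & (lin z0 z1).[s] = 0].
Proof.
move=> hx hy hz h Xs.
have hX := prop _ _ Xs.
have hk : 0 < x1 / n1 by rewrite divr_gt0.
set k := x1 / n1 in hX hk; clearbody k.
rewrite hX in h.
have nN : N != 0 by rewrite /N lin_nz.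
have := @helperA (c * k - 1) k y0 y1 z0 z1 hk hy hz.
case.
  apply: (mulfI nN).
  rewrite polyCB polyCM polyC1.
  transitivity (c%:P * (k%:P * N * lin y0 y1 * lin z0 z1) - N * (lin y0 y1 * lin z0 z1)); first by ring.
  rewrite h; ring.
by move=> -> ->.
Qed.

Lemma fin a b : (lin a b).[s] = 0 -> b = a * n1 / n0.
Proof.
rewrite linE /s => h.
have -> : a = - (b * - (n0 / n1)) by apply/eqP; rewrite -subr_eq0 opprK h.
by field; rewrite ?nz1 ?gt_eqF.
Qed.
End Core.

Theorem lemma4 (m n0 n1 : nat) (x0 x1 y0 y1 z0 z1 : rat) :
  (0 < m)%N -> (0 < n0)%N -> (0 < n1)%N ->
  0 < x0 -> 0 < x1 -> 0 < y0 -> 0 < y1 -> 0 < z0 -> 0 < z1 ->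
  (m%:R : ratfun) / toRF (lin n0%:R n1%:R) =
    (toRF (lin x0 x1))^-1 + (toRF (lin y0 y1))^-1 + (toRF (lin z0 z1))^-1 ->
  x1 = x0 * n1%:R / n0%:R /\ y1 = y0 * n1%:R / n0%:R /\ z1 = z0 * n1%:R / n0%:R.
Proof.
move=> hm hn0 hn1 hx0 hx1 hy0 hy1 hz0 hz1 H.
have hn0' : 0 < (n0%:R : rat) by rewrite ltr0n.
have hn1' : 0 < (n1%:R : rat) by rewrite ltr0n.
have hm' : (m%:R : rat) != 0 by rewrite pnatr_eq0 -lt0n.
have P := @poly_id m _ _ _ _ (lin_nz _ _ hn0') (lin_nz _ _ hx0) (lin_nz _ _ hy0) (lin_nz _ _ hz0) H.
rewrite -polyC_natr in P.
set s := - ((n0%:R : rat) / n1%:R).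
suff [Xs Ys Zs] : [/\ (lin x0 x1).[s] = 0, (lin y0 y1).[s] = 0 & (lin z0 z1).[s] = 0].
  by split; [|split]; apply: (@fin _ _ hn0' hn1').
have Ps := congr1 (fun p => p.[s]) P.
move: Ps; rewrite /= !hornerM hornerC (Ns _ _ hn1') mul0r => /eqP.
rewrite !mulf_eq0 (negPf hm') /= => /orP [/orP [/eqP Xs|/eqP Ys]|/eqP Zs].
- exact: (@core _ _ hn0' hn1' _ _ _ _ _ _ _ hx1 hy0 hz0 P Xs).
- have P' : (m%:R : rat)%:P * (lin y0 y1 * lin x0 x1 * lin z0 z1) =
    lin n0%:R n1%:R * (lin x0 x1 * lin z0 z1 + lin y0 y1 * lin z0 z1 + lin y0 y1 * lin x0 x1).
    transitivity ((m%:R : rat)%:P * (lin x0 x1 * lin y0 y1 * lin z0 z1)); first by ring.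
    by rewrite P; ring.
  by case: (@core _ _ hn0' hn1' _ _ _ _ _ _ _ hy1 hx0 hz0 P' Ys).
- have P' : (m%:R : rat)%:P * (lin z0 z1 * lin y0 y1 * lin x0 x1) =
    lin n0%:R n1%:R * (lin y0 y1 * lin x0 x1 + lin z0 z1 * lin x0 x1 + lin z0 z1 * lin y0 y1).
    transitivity ((m%:R : rat)%:P * (lin x0 x1 * lin y0 y1 * lin z0 z1)); first by ring.
    by rewrite P; ring.
  by case: (@core _ _ hn0' hn1' _ _ _ _ _ _ _ hz1 hy0 hx0 P' Zs).
Qed.
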